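(* Let $S$ and $T$ be semigroups such that for each $b\in T$ there exist $a\in S$ and a homomorphism $\phi:S\to T$ with $a\phi=b$ and $\mathbf{r}_S(a)\phi=\mathbf{r}_T(b)$, where $\mathbf{r}_S(a)\phi=\{(s\phi,t\phi)\mid (s,t)\in\mathbf{r}_S(a)\}$. If $S$ is finitely right equated then so is $T$.
   Context: For a semigroup $S$ and $a\in S$, $\mathbf{r}_S(a)=\{(s,t)\in S\times S\mid as=at\}$; $S$ is finitely right equated if each $\mathbf{r}_S(a)$ is finitely generated as a right congruence. *)

(* Defs.v *)
From Stdlib Require Import List.

Record semigroup := Semigroup {
  sg_car :> Type;
  sg_op : sg_car -> sg_car -> sg_car;
  sg_opA : forall x y z, sg_op x (sg_op y z) = sg_op (sg_op x y) z
}.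
Arguments sg_op {s} _ _.

Definition rann {S : semigroup} (a : S) : S -> S -> Prop :=
  fun s t => sg_op a s = sg_op a t.

Definition is_right_congruence {S : semigroup} (rho : S -> S -> Prop) : Prop :=
  (forall s, rho s s) /\
  (forall s t, rho s t -> rho t s) /\
  (forall s t u, rho s t -> rho t u -> rho s u) /\
  (forall s t u, rho s t -> rho (sg_op s u) (sg_op t u)).

Definition right_cong_gen {S : semigroup} (X : list (S * S)) : S -> S -> Prop :=
  fun s t => forall rho : S -> S -> Prop, is_right_congruence rho ->
    (forall p, In p X -> rho (fst p) (snd p)) -> rho s t.

Definition fg_right_congruence {S : semigroup} (rho : S -> S -> Prop) : Prop :=
  exists X : list (S * S), forall s t, rho s t <-> right_cong_gen X s t.

Definition finitely_right_equated (S : semigroup) : Prop :=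
  forall a : S, fg_right_congruence (rann a).

Definition is_hom {S T : semigroup} (phi : S -> T) : Prop :=
  forall x y, phi (sg_op x y) = sg_op (phi x) (phi y).

Definition rel_image {S T : semigroup} (phi : S -> T) (rho : S -> S -> Prop)
  : T -> T -> Prop :=
  fun x y => exists s t, rho s t /\ phi s = x /\ phi t = y.

(* Main.v *)
Require Import Defs.
From Stdlib Require Import List.

Theorem mainTheorem15 (S T : semigroup) :
  (forall b : T, exists (a : S) (phi : S -> T),
      is_hom phi /\ phi a = b /\
      (forall x y, rel_image phi (rann a) x y <-> rann b x y)) ->
  finitely_right_equated S -> finitely_right_equated T.
Proof.
  intros H HS b.
  destruct (H b) as [a [phi [Hhom [Hab Himg]]]].
  destruct (HS a) as [X HX].
  exists (map (fun p => (phi (fst p), phi (snd p))) X).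
  intros x y; split.
  - intros Hr. apply Himg in Hr. destruct Hr as [s [t [Hst [<- <-]]]].
    apply HX in Hst.
    intros rho [Hre [Hsy [Htr Hcomp]]] Hgen.
    set (rho' := fun s t => rho (phi s) (phi t)).
    change (rho' s t). apply Hst.
    + unfold is_right_congruence, rho'. split; [|split; [|split]].
      * intros; apply Hre.
      * intros; apply Hsy; auto.
      * intros; eapply Htr; eauto.
      * intros s0 t0 u H0. rewrite !Hhom. apply Hcomp; auto.
    + intros p Hp. unfold rho'.
      apply (Hgen (phi (fst p), phi (snd p))).
      apply in_map_iff. exists p; auto.
  - intros Hg. apply Hg.
    + unfold is_right_congruence, rann. split; [|split; [|split]].
      * intros; reflexivity.
      * intros s0 t0 H0; symmetry; exact H0.
      * intros; etransitivity; eauto.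
      * intros s0 t0 u H0. rewrite !sg_opA, H0. reflexivity.
    + intros p Hp. apply in_map_iff in Hp. destruct Hp as [q [<- Hq]].
      simpl. apply Himg. exists (fst q), (snd q). split; auto.
      apply HX. intros rho _ Hgen. apply Hgen; auto.
Qed.
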